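(* Consider sources $m\neq n$ and a relay $i$. Let $A$ be a nonempty set of relays other than $i$, so that the coalition $\mathcal S_m=\{m\}\cup A\cup\{i\}$ contains more than two members, and let $\mathcal S_n=\{n,i\}$ be the coalition in which relay $i$ is the only relay helping source $n$. Ignore costs ($\kappa=0$) and use the user-fairness payoff. If $\phi_i(\mathcal S_m)<\phi_i(\mathcal S_n)$, i.e. $$\frac{G_{mi}}{D_m+G_{mi}+\sum_{j\in A}G_{mj}}<\frac{G_{ni}}{D_n+G_{ni}},$$ then $v(\mathcal S_m)+v(\{n\})<v(\{m\}\cup A)+v(\mathcal S_n)$.
   Context: Multi-source model: $M$ sources, relays, one destination. For source $k$ and relay $j$, $G_{kj}=P_{kj}|g_j|^2/(1+c_j^\alpha)\ge0$ is the SNR contribution of relay $j$ when helping source $k$ (with $P_{kj}=\max\{0,\eta(P|h_{kj}|^2/(1+d_{kj}^\alpha)-\tau)\}$ the harvested power), and $D_k=P|h_{dk}|^2/(1+d_{0k}^\alpha)\ge0$ is the direct-link SNR of source $k$. A coalition $\mathcal S_k$ consists of source $k$ and a set $B$ of relays; $SNR_{\mathcal S_k}=D_k+\sum_{j\in B}G_{kj}$. User-fairness payoff of relay $j\in B$: $\phi_j(\mathcal S_k)=\frac{SNR_{\mathcal S_k}-SNR_{\mathcal S_k\setminus\{j\}}}{SNR_{\mathcal S_k}}-c(\mathcal S_k)=\frac{G_{kj}}{SNR_{\mathcal S_k}}-c(\mathcal S_k)$, where the cost $c(\mathcal S_k)=\kappa\cdot\#\{\text{relays in }B\text{ that decode source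 }k\}$. Coalition value $v(\mathcal S_k)=\sum_{j\in B}\phi_j(\mathcal S_k)$ (so a coalition with no relays has value $0$). Assume all SNRs appearing in denominators are positive (e.g. $D_m>0$ and $D_n+G_{ni}>0$). *)

(* Defs.v *)
From HB Require Import structures.
From mathcomp Require Import all_boot all_order all_algebra.
Set Implicit Arguments. Unset Strict Implicit. Unset Printing Implicit Defensive.
Import Order.TTheory GRing.Theory Num.Theory.
Local Open Scope ring_scope.

(* Sources range over a finite type [Src], relays over a finite type [Rel].
   [G k j] : SNR contribution of relay j helping source k.
   [D k]   : direct-link SNR of source k.
   [dec k j] : relay j decodes source k (used only in the cost).
   A coalition S_k is source k together with a set B : {set Rel} of relays. *)

Definition SNR (R : realFieldType) (Src Rel : finType)
  (G : Src -> Rel -> R) (D : Src -> R) (k : Src) (B : {set Rel}) : R :=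
  D k + \sum_(j in B) G k j.

Definition cost (R : realFieldType) (Src Rel : finType)
  (kappa : R) (dec : Src -> Rel -> bool) (k : Src) (B : {set Rel}) : R :=
  kappa * (#|[set j in B | dec k j]|)%:R.

Definition phi (R : realFieldType) (Src Rel : finType)
  (G : Src -> Rel -> R) (D : Src -> R) (kappa : R) (dec : Src -> Rel -> bool)
  (k : Src) (B : {set Rel}) (j : Rel) : R :=
  (SNR G D k B - SNR G D k (B :\ j)) / SNR G D k B - cost kappa dec k B.

Definition value (R : realFieldType) (Src Rel : finType)
  (G : Src -> Rel -> R) (D : Src -> R) (kappa : R) (dec : Src -> Rel -> bool)
  (k : Src) (B : {set Rel}) : R :=
  \sum_(j in B) phi G D kappa dec k B j.

(* Main.v *)
Require Import Defs.
From HB Require Import structures.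
From mathcomp Require Import all_boot all_order all_algebra.
From mathcomp Require Import ring lra.
Import Order.TTheory GRing.Theory Num.Theory.
Local Open Scope ring_scope.

Lemma phi0E (R : realFieldType) (Src Rel : finType)
  (G : Src -> Rel -> R) (D : Src -> R) (dec : Src -> Rel -> bool) k (B : {set Rel}) (j : Rel) :
  j \in B -> phi G D 0 dec k B j = G k j / SNR G D k B.
Proof.
move=> jB; rewrite /phi /cost mul0r subr0 /SNR (big_setD1 j jB) /=.
congr (_ / _); ring.
Qed.

Lemma value0E (R : realFieldType) (Src Rel : finType)
  (G : Src -> Rel -> R) (D : Src -> R) (dec : Src -> Rel -> bool) k (B : {set Rel}) :
  SNR G D k B != 0 -> value G D 0 dec k B = 1 - D k / SNR G D k B.
Proof.
move=> h; rewrite /value (eq_bigr (fun j => G k j / SNR G D k B)).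
  rewrite -mulr_suml; apply: (mulIf h); rewrite mulrBl !divfK // mul1r /SNR; ring.
by move=> j jB; rewrite phi0E.
Qed.

Theorem proposition2 (R : realFieldType) (Src Rel : finType)
  (G : Src -> Rel -> R) (D : Src -> R) (dec : Src -> Rel -> bool)
  (m n : Src) (i : Rel) (A : {set Rel})
  (hG : forall k j, 0 <= G k j) (hD : forall k, 0 <= D k)
  (hDm : 0 < D m) (hDn : 0 < D n + G n i)
  (hmn : m != n) (hA : A != set0) (hiA : i \notin A)
  (hphi : phi G D 0 dec m (i |: A) i < phi G D 0 dec n [set i] i) :
  value G D 0 dec m (i |: A) + value G D 0 dec n set0
    < value G D 0 dec m A + value G D 0 dec n [set i].
Proof.
have sumA : 0 <= \sum_(j in A) G m j by apply: sumr_ge0.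
have eS : SNR G D m (i |: A) = D m + G m i + \sum_(j in A) G m j.
  rewrite /SNR (big_setD1 i) ?setU11 //= setU1K //; ring.
have eT : SNR G D m A = D m + \sum_(j in A) G m j by [].
have eN : SNR G D n [set i] = D n + G n i by rewrite /SNR big_set1.
have Gmi := hG m i.
set s := \sum_(j in A) G m j in sumA eS eT.
have Sp : 0 < D m + G m i + s by lra.
have Tp : 0 < D m + s by lra.
rewrite !phi0E ?setU11 ?set11 // eS eN in hphi.
have -> : value G D 0 dec n set0 = 0 by rewrite /value big_set0.
rewrite addr0 (@value0E R Src Rel G D dec m (i |: A)) ?eS ?gt_eqF //.
rewrite (@value0E R Src Rel G D dec m A) ?eT ?gt_eqF //.
rewrite (@value0E R Src Rel G D dec n [set i]) ?eN ?gt_eqF //.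
have key : D m / (D m + s) - D m / (D m + G m i + s) <= G m i / (D m + G m i + s).
  rewrite -subr_ge0.
  have -> : G m i / (D m + G m i + s) - (D m / (D m + s) - D m / (D m + G m i + s))
     = G m i * s / ((D m + s) * (D m + G m i + s)).
    by field; rewrite ?gt_eqF //; lra.
  by apply: divr_ge0; [apply: mulr_ge0 | apply: mulr_ge0; lra].
have e1 : 1 - D n / (D n + G n i) = G n i / (D n + G n i) by field; rewrite gt_eqF.
rewrite e1.
move: key hphi.
set a := D m / (D m + s). set b := D m / (D m + G m i + s).
set c := G m i / (D m + G m i + s). set d := G n i / (D n + G n i).
move=> key hphi.
lra.
Qed.
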